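(* For every $T\in L(W,V)$ with $\mathcal{I}_T=(p_1,\ldots,p_k)$, we have $\dim \mathfrak{I}(T)=\deg \prod_{i=1}^{k}p_i$.
   Context: Let $\mathbb{F}_q$ be the finite field with $q$ elements and let $n\ge k$ be positive integers. Let $V$ be an $n$-dimensional $\mathbb{F}_q$-vector space and $W\subseteq V$ a $k$-dimensional subspace. Fix an ordered basis $\mathcal{B}_1=(v_1,\ldots,v_k)$ of $W$ and extend it to an ordered basis $\mathcal{B}_2=(v_1,\ldots,v_n)$ of $V$. $L(W,V)$ denotes the space of $\mathbb{F}_q$-linear maps $W\to V$. $I_{n,k}\in M_{n,k}(\mathbb{F}_q)$ is the matrix whose $(i,j)$ entry is $1$ if $i=j$ and $0$ otherwise. For a nonzero polynomial matrix $A\in M_{n,k}(\mathbb{F}_q[x])$, its $i$-th determinantal divisor $\delta_i(A)$ is the monic gcd of all $i\times i$ minors of $A$ (with $\delta_0=1$), and its invariant factors are the monic polynomials $p_i=\delta_i(A)/\delta_{i-1}(A)$ (for those $i$ with $\delta_i(A)\neq 0$); they satisfy $p_i\mid p_{i+1}$ and are the diagonal entries of the Smith normal form of $A$. For $T\in L(W,V)$ with matrix $B\in M_{n,k}(\mathbb{F}_q)$ with respect to $\mathcal{B}_1,\mathcal{B}_2$, the matrix $xI_{n,k}-B$ always has $\delta_k\neq 0$, hence exactly $k$ invariant factors $p_1\mid p_2\mid\cdots\mid p_k$; these are called the invariant factors of $T$, and we write $\mathcal{I}_T=(p_1,\ldots,p_k)$. $\mathfrak{I}(T)$ denotes the maximal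 $T$-invariant subspace contained in $W$, i.e. the largest subspace $U\subseteq W$ with $T(U)\subseteq U$. *)

(* Defs.v *)
From HB Require Import structures.
From mathcomp Require Import all_boot all_order all_algebra all_field.
Set Implicit Arguments. Unset Strict Implicit. Unset Printing Implicit Defensive.
Import GRing.Theory.
Local Open Scope ring_scope.

(* Coordinates: V = F^n (row vectors, coordinates w.r.t. B2 = (v_1..v_n)),
   W = span(v_1,..,v_k) = row space of pid_mx k : 'M_(k,n).
   T : W -> V has matrix B : 'M_(n,k) w.r.t. B1, B2 (column j = coords of T v_j). *)

Section Defs.
Variable F : finFieldType.

Definition Wmx (n k : nat) : 'M[F]_(k, n) := pid_mx k.

(* T viewed on row coordinate vectors of W inside V: u |-> u *m Tmx;
   u *m I_{n,k} extracts the W-coordinates, then apply B. *)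
Definition Tmx (n k : nat) (B : 'M[F]_(n, k)) : 'M[F]_n :=
  (pid_mx k : 'M[F]_(n, k)) *m B^T.

(* the maximal T-invariant subspace contained in W: the sum of all
   T-invariant subspaces contained in W (F finite, so 'M_n is a finType) *)
Definition maxInv (n k : nat) (B : 'M[F]_(n, k)) : 'M[F]_n :=
  (\sum_(U : 'M[F]_n | (U <= Wmx n k)%MS && (U *m Tmx B <= U)%MS) U)%MS.

Definition charmx (n k : nat) (B : 'M[F]_(n, k)) : 'M[{poly F}]_(n, k) :=
  'X *: (pid_mx k : 'M[{poly F}]_(n, k)) - map_mx polyC B.

Definition monicize (p : {poly F}) : {poly F} := (lead_coef p)^-1 *: p.

Definition incr (i m : nat) (f : {ffun 'I_i -> 'I_m}) : bool :=
  [forall a : 'I_i, forall b : 'I_i, (a < b)%N ==> (f a < f b)%N].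

Definition detdiv (n k : nat) (A : 'M[{poly F}]_(n, k)) (i : nat) : {poly F} :=
  monicize (\big[@gcdp F/0]_(f : {ffun 'I_i -> 'I_n} | incr f)
              \big[@gcdp F/0]_(g : {ffun 'I_i -> 'I_k} | incr g)
                 \det (mxsub f g A)).

Definition invfact (n k : nat) (A : 'M[{poly F}]_(n, k)) (i : nat) : {poly F} :=
  detdiv A i %/ detdiv A i.-1.

End Defs.

(* Main.v *)
Require Import Defs.
From HB Require Import structures.
From mathcomp Require Import all_boot all_order all_algebra all_field.
From mathcomp Require Import zify.
From Stdlib Require Import Classical.
Set Implicit Arguments. Unset Strict Implicit. Unset Printing Implicit Defensive.
Import GRing.Theory.
Local Open Scope ring_scope.


Section PolyGen.
Variable F : fieldType.

Lemma bgcd_dvd (I : finType) (P : pred I) (G : I -> {poly F}) i :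
  P i -> \big[@gcdp F/0]_(j | P j) G j %| G i.
Proof.
move=> Pi; have : i \in index_enum I by rewrite mem_index_enum.
elim: (index_enum I) => [//|x r IH]; rewrite inE big_cons.
case/orP=> [/eqP <-|ir]; first by rewrite Pi dvdp_gcdl.
case: (P x); last exact: IH.
by apply: dvdp_trans (IH ir); apply: dvdp_gcdr.
Qed.

Lemma dvd_bgcd (I : finType) (P : pred I) (G : I -> {poly F}) d :
  (forall i, P i -> d %| G i) -> d %| \big[@gcdp F/0]_(j | P j) G j.
Proof.
move=> H; apply: (big_ind (fun q => d %| q)) => [|x y hx hy|i Pi].
- exact: dvdp0.
- by rewrite dvdp_gcd hx hy.
- exact: H.
Qed.

Lemma dvdp_bsum (I : Type) (r : seq I) (P : pred I) (G : I -> {poly F}) d :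
  (forall i, P i -> d %| G i) -> d %| \sum_(i <- r | P i) G i.
Proof.
move=> H; apply: (big_ind (fun q => d %| q)) => [|x y hx hy|i Pi].
- exact: dvdp0.
- by rewrite dvdp_add.
- exact: H.
Qed.

Lemma telescope (P : nat -> {poly F}) k :
  (forall i, (0 < i <= k)%N -> P i.-1 %| P i) ->
  \prod_(1 <= i < k.+1) (P i %/ P i.-1) * P 0%N = P k.
Proof.
elim: k => [|k IH] H; first by rewrite big_geq // mul1r.
rewrite big_nat_recr //= mulrAC IH; last first.
  by move=> i /andP[i0 ik]; apply: H; rewrite i0 (leq_trans ik).
rewrite Pdiv.Field.divpKC //.
by have := H k.+1; rewrite ltn0Sn leqnn; apply.

Qed.

Lemma exists_irr (q : {poly F}) : (1 < size q)%N ->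
  exists p, monic_irreducible_poly p /\ p %| q.
Proof.
move: {2}(size q) (leqnn (size q)) => s; elim: s q => [|s IH] q.
  by rewrite leqn0 => /eqP ->.
move=> hs hq.
have [irr|nirr] := classic (irreducible_poly q).
  have lq0 : lead_coef q != 0 by rewrite lead_coef_eq0 -size_poly_gt0 (ltn_trans _ hq).
  exists ((lead_coef q)^-1 *: q); split; last by rewrite dvdpZl // invr_eq0.
  have eq1 : (lead_coef q)^-1 *: q %= q by rewrite eqp_scale // invr_eq0.
  split; last by rewrite monicE lead_coefZ mulVf.
  split; first by rewrite (eqp_size eq1).
  move=> d sd dd.
  have h1 : d %| q by rewrite -(eqp_dvdr _ eq1).
  by rewrite (eqp_ltrans (irr.2 d sd h1)) eqp_sym.
have [d [sd [dq ndq]]] : exists d : {poly F}, size d != 1%N /\ d %| q /\ ~~ (d %= q).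
  apply: NNPP => hne; apply: nirr; split => // d sd dq.
  by apply: NNPP => nd; apply: hne; exists d; split => //; split => //; apply/negP.
have q0 : q != 0 by rewrite -size_poly_gt0 (ltn_trans _ hq).
have d0 : d != 0 by apply: contra_neq q0 => d0; move: dq; rewrite d0 dvd0p => /eqP.
have sdq : (size d < size q)%N.
  by rewrite ltn_neqAle (dvdp_leq q0 dq) andbT dvdp_size_eqp.
have [p [ip pd]] : exists p, monic_irreducible_poly p /\ p %| d.
  apply: IH; first by rewrite -ltnS (leq_trans sdq).
  by rewrite ltn_neqAle eq_sym sd size_poly_gt0 d0.
by exists p; split => //; apply: dvdp_trans pd dq.
Qed.

End PolyGen.


Lemma incrP (i m : nat) (f : {ffun 'I_i -> 'I_m}) :
  incr f -> forall a b : 'I_i, (a < b)%N -> (f a < f b)%N.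
Proof. by move=> /forallP H a b ab; have /forallP/(_ b)/implyP := H a; apply. Qed.

Lemma incrI (i m : nat) (f : {ffun 'I_i -> 'I_m}) :
  (forall a b : 'I_i, (a < b)%N -> (f a < f b)%N) -> incr f.
Proof. by move=> H; apply/forallP=> a; apply/forallP=> b; apply/implyP; apply: H. Qed.

Lemma incr_id k (g : {ffun 'I_k -> 'I_k}) : incr g -> forall i, g i = i.
Proof.
move=> /incrP H.
have ge : forall i : 'I_k, (i <= g i)%N.
  move=> i; move Ei: (nat_of_ord i) => j; elim: j i Ei => [|j IH] i ij; first by [].
  have jk : (j < k)%N by have := ltn_ord i; lia.
  have h2 := IH (Ordinal jk) erefl; have := H (Ordinal jk) i; rewrite ij /= => h1.
  by apply: leq_ltn_trans h2 (h1 (ltnSn j)).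
have le : forall j (i : 'I_k), (i + j)%N = k.-1 -> (g i <= i)%N.
  elim=> [|j IH] i ij.
    by have := ltn_ord (g i); have := ltn_ord i; lia.
  have i1 : (i.+1 < k)%N by have := ltn_ord i; lia.
  have h := IH (Ordinal i1) ltac:(rewrite /=; lia).
  have := H i (Ordinal i1) (ltnSn _); rewrite /= in h *; lia.
move=> i; apply: val_inj; apply/eqP; rewrite eqn_leq ge andbT.
apply: (le (k.-1 - i)%N); have := ltn_ord i; lia.
Qed.

Lemma incr_lift i n (f : {ffun 'I_i.+1 -> 'I_n}) (i0 : 'I_i.+1) :
  incr f -> incr [ffun x : 'I_i => f (lift i0 x)].
Proof.
move=> /incrP H; apply: incrI => a b ab; rewrite !ffunE; apply: H.
rewrite /= /bump; move: ab; case: (leqP i0 a); case: (leqP i0 b) => /= h1 h2; lia.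
Qed.

Lemma tr_colsub (R : Type) m n p (g : 'I_p -> 'I_n) (A : 'M[R]_(m, n)) :
  (colsub g A)^T = rowsub g A^T.
Proof. by apply/matrixP=> i j; rewrite !mxE. Qed.

Lemma row_rowsub (R : Type) m n p (f : 'I_p -> 'I_m) (A : 'M[R]_(m, n)) i :
  row i (rowsub f A) = row (f i) A.
Proof. by apply/rowP=> j; rewrite !mxE. Qed.

Lemma minor_nonzero (K : fieldType) m n (A : 'M[K]_(m, n)) :
  row_free A -> exists g : {ffun 'I_m -> 'I_n}, incr g /\ \det (colsub g A) != 0.
Proof.
move=> rfA.
have rf : row_full A^T by rewrite /row_full mxrank_tr; apply/eqP; apply/eqP.
set f := fullrankfun rf.
have finj : injective f := @fullrankfun_inj _ _ _ _ rf.
have ff : row_full (rowsub f A^T) := @fullrowsub_full _ _ _ _ rf.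
clearbody f.
pose s := [seq j <- enum 'I_n | j \in codom f].
have us : uniq s by rewrite filter_uniq // enum_uniq.
have uc : uniq (codom f) by rewrite /codom map_inj_uniq // enum_uniq.
have ms : s =i codom f by move=> j; rewrite mem_filter mem_enum andbT.
have ss : size s = m.
  by rewrite (perm_size (uniq_perm us uc ms)) size_codom card_ord.
have sorted_s : sorted (relpre val ltn) s.
  apply: sorted_filter; first by move=> x y z /= ; apply: ltn_trans.
  by rewrite -sorted_map val_enum_ord iota_ltn_sorted.
pose g := [ffun i : 'I_m => nth (f i) s i].
have gincr : incr g.
  apply: incrI => a b ab; rewrite !ffunE.
  rewrite (set_nth_default (f a) (f b)) ?ss ?ltn_ord //.
  have := @sorted_ltn_nth _ (relpre val ltn) _ (f a) s sorted_s a b.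
  rewrite !inE ss !ltn_ord; apply => //.
  by move=> x y z /=; apply: ltn_trans.
exists g; split => //.
have sub : (rowsub f A^T <= rowsub g A^T)%MS.
  apply/row_subP=> i; rewrite row_rowsub.
  have fis : f i \in s by rewrite ms codom_f.
  have ix : (index (f i) s < m)%N by move: fis; rewrite -index_mem ss.
  have -> : f i = g (Ordinal ix) by rewrite ffunE /= nth_index.
  by rewrite -row_rowsub row_sub.
have fg : row_full (rowsub g A^T).
  by rewrite /row_full eqn_leq rank_leq_col -{1}(eqP ff) mxrankS.
rewrite -det_tr tr_colsub.
by move: fg; rewrite row_full_unit unitmxE unitfE.
Qed.


Section Minors.
Variable F : finFieldType.

Definition mgcd n k (A : 'M[{poly F}]_(n, k)) i :=
  \big[@gcdp F/0]_(f : {ffun 'I_i -> 'I_n} | incr f)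
    \big[@gcdp F/0]_(g : {ffun 'I_i -> 'I_k} | incr g) \det (mxsub f g A).

Lemma monicize_eqp (p : {poly F}) : monicize p %= p.
Proof.
rewrite /monicize; have [->|p0] := eqVneq p 0; first by rewrite scaler0 eqpxx.
by rewrite eqp_scale // invr_eq0 lead_coef_eq0.
Qed.

Lemma detdiv_eqp n k (A : 'M[{poly F}]_(n, k)) i : detdiv A i %= mgcd A i.
Proof. exact: monicize_eqp. Qed.

Lemma mgcd_dvd n k (A : 'M[{poly F}]_(n, k)) i (f : {ffun 'I_i -> 'I_n}) (g : {ffun 'I_i -> 'I_k}) :
  incr f -> incr g -> mgcd A i %| \det (mxsub f g A).
Proof.
move=> hf hg; apply: dvdp_trans (bgcd_dvd _ hf) _; exact: bgcd_dvd.
Qed.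

Lemma dvd_mgcd n k (A : 'M[{poly F}]_(n, k)) i d :
  (forall (f : {ffun 'I_i -> 'I_n}) (g : {ffun 'I_i -> 'I_k}), incr f -> incr g -> d %| \det (mxsub f g A)) -> d %| mgcd A i.
Proof. by move=> H; apply: dvd_bgcd => f hf; apply: dvd_bgcd => g hg; apply: H. Qed.

Lemma mgcd_chain n k (A : 'M[{poly F}]_(n, k)) i : mgcd A i %| mgcd A i.+1.
Proof.
apply: dvd_mgcd => f g hf hg.
rewrite (expand_det_row _ ord0); apply: dvdp_bsum => j _.
apply: dvdp_mull; rewrite /cofactor; apply: dvdp_mull.
have -> : row' ord0 (col' j (mxsub f g A)) =
   mxsub [ffun x : 'I_i => f (lift ord0 x)] [ffun x : 'I_i => g (lift j x)] A.
  by apply/matrixP=> a b; rewrite !mxE !ffunE.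
by apply: mgcd_dvd; apply: incr_lift.
Qed.

Lemma mgcd0 n k (A : 'M[{poly F}]_(n, k)) : mgcd A 0 %= 1.
Proof.
rewrite -size_poly_eq1 -dvdp1.
have -> : 1 = \det (mxsub [ffun x : 'I_0 => widen_ord (leq0n n) x]
                          [ffun x : 'I_0 => widen_ord (leq0n k) x] A).
  by rewrite det_mx00.
by apply: mgcd_dvd; apply: incrI => -[].
Qed.

End Minors.


Section Setup.
Variable F : finFieldType.
Variables n k : nat.
Hypothesis hkn : (k <= n)%N.
Variable B : 'M[F]_(n, k).

Definition J : 'M[F]_(k, n) := pid_mx k.
Definition Jt : 'M[F]_(n, k) := pid_mx k.
Definition Bt := B^T.
Definition Nk := maxInv B *m Jt.

Lemma JJt : J *m Jt = 1%:M.
Proof.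
rewrite /J /Jt mul_pid_mx minnn.
have -> : minn n k = k by apply/minn_idPr.
by rewrite pid_mx_1.
Qed.

Lemma TmxE : Tmx B = Jt *m Bt.
Proof. by []. Qed.

Lemma maxInv_W : (maxInv B <= J)%MS.
Proof. by apply/sumsmx_subP => U /andP[]. Qed.

Lemma maxInv_inv : (maxInv B *m Tmx B <= maxInv B)%MS.
Proof.
rewrite /maxInv sumsmxMr; apply/sumsmx_subP => U hU0.
have /andP[_ hU] := hU0.
by apply: submx_trans hU _; apply: (sumsmx_sup U).
Qed.

Lemma maxInv_max (U : 'M[F]_n) : (U <= J)%MS -> (U *m Tmx B <= U)%MS ->
  (U <= maxInv B)%MS.
Proof. by move=> h1 h2; apply: (sumsmx_sup U) => //; rewrite /Wmx; apply/andP. Qed.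

Lemma maxInv_eq : maxInv B = Nk *m J.
Proof.
rewrite /Nk; have /submxP[X ->] := maxInv_W.
by rewrite -!mulmxA (mulmxA J) JJt mul1mx.
Qed.

Lemma Nk_inv : (Nk *m Bt <= Nk *m J)%MS.
Proof.
rewrite -maxInv_eq.
have := maxInv_inv; rewrite TmxE mulmxA.
by rewrite -/Nk.
Qed.

Lemma Nk_max m (Z : 'M[F]_(m, k)) : (Z *m Bt <= Z *m J)%MS -> (Z <= Nk)%MS.
Proof.
move=> hZ.
have h : (<<Z *m J>>%MS <= maxInv B)%MS.
  apply: maxInv_max; first by rewrite genmxE submxMl.
  rewrite (eqmxMr _ (genmxE _)) genmxE TmxE mulmxA -(mulmxA Z) JJt mulmx1.
  exact: hZ.
rewrite genmxE in h.
have := submxMr Jt h; rewrite -mulmxA JJt mulmx1.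
by [].
Qed.

Lemma rank_maxInv : \rank (maxInv B) = \rank Nk.
Proof.
apply/eqP; rewrite eqn_leq {1}maxInv_eq mxrankM_maxl /=.
by rewrite /Nk mxrankM_maxl.
Qed.

End Setup.


Section Core.
Variable F : finFieldType.
Variables n d r : nat.
Hypothesis hkn : (d + r <= n)%N.
Variable B : 'M[F]_(n, d + r).
Variable Nb : 'M[F]_(d, d + r).
Variable E : 'M[F]_(r, d + r).
Hypothesis hNb : (Nb :=: Nk B)%MS.
Hypothesis hS : col_mx Nb E \in unitmx.

Local Notation J := (J F n (d + r)).
Local Notation Jt := (Jt F n (d + r)).
Local Notation Bt := (Bt B).
Local Notation PC := (map_mx (@polyC F)).

Definition MT := (charmx B)^T.

Lemma MT_eq : MT = 'X *: PC J - PC Bt.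
Proof.
apply/matrixP=> i j; rewrite !mxE.
have [ij|nij] := eqVneq (nat_of_ord j) (nat_of_ord i).
  by rewrite ij /= ltn_ord polyC1.
by rewrite /= polyC0.
Qed.

Definition S := col_mx Nb E.

Lemma S_inj m (x : 'M[F]_(m, d)) (y : 'M[F]_(m, r)) :
  x *m Nb + y *m E = 0 -> x = 0 /\ y = 0.
Proof.
rewrite -mul_row_col => /(congr1 (mulmx^~ (invmx S))).
rewrite mul0mx mulmxK // => /eqP; rewrite row_mx_eq0 => /andP[/eqP -> /eqP ->].
by [].
Qed.

Lemma NbBt_le : (Nb *m Bt <= Nb *m J)%MS.
Proof. by rewrite !(eqmxMr _ hNb); apply: Nk_inv. Qed.

Definition C11 := Nb *m Bt *m pinvmx (Nb *m J).

Lemma C11E : C11 *m (Nb *m J) = Nb *m Bt.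
Proof. exact: mulmxKpV NbBt_le. Qed.

Lemma NbMT : PC Nb *m MT = char_poly_mx C11 *m PC (Nb *m J).
Proof.
rewrite MT_eq /char_poly_mx mulmxBr mulmxBl -scalemxAr mul_scalar_mx.
by rewrite -!map_mxM C11E.
Qed.

Definition H := col_mx (PC (Nb *m J)) (PC E *m MT).

Lemma SMT : PC S *m MT = block_mx (char_poly_mx C11) 0 0 1%:M *m H.
Proof.
by rewrite /S map_col_mx mul_col_mx NbMT mul_block_col !mul0mx !mul1mx addr0 add0r.
Qed.

Lemma KI (f : 'I_(d + r) -> 'I_n) :
  (\det S)%:P * \det (colsub f MT) = char_poly C11 * \det (colsub f H).
Proof.
have := congr1 (fun M => \det (colsub f M)) SMT.
rewrite /= -!mulmx_colsub !det_mulmx det_ublock det1 mulr1 det_map_mx.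
by [].
Qed.

End Core.


Section Descent.
Variable F : finFieldType.
Variables n d r : nat.
Hypothesis hkn : (d + r <= n)%N.
Variable B : 'M[F]_(n, d + r).
Variable Nb : 'M[F]_(d, d + r).
Variable E : 'M[F]_(r, d + r).
Hypothesis hNb : (Nb :=: Nk B)%MS.
Hypothesis hS : col_mx Nb E \in unitmx.
Variable p : {poly F}.
Hypothesis hI : monic_irreducible_poly p.

Local Notation J := (J F n (d + r)).
Local Notation Jt := (Jt F n (d + r)).
Local Notation Bt := (Bt B).
Local Notation PC := (map_mx (@polyC F)).
Local Notation K := {poly %/ p with hI}.
Local Notation HH := (H B Nb E).

Hypothesis hdiv : forall f : {ffun 'I_(d + r) -> 'I_n}, incr f ->
  p %| \det (colsub f HH).

Definition phi : {poly F} -> K := in_qpoly p.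

Lemma phi_dvd q : p %| q -> phi q = 0.
Proof.
move=> hq; apply/val_eqP; rewrite /= mk_monicE //.
rewrite -Pdiv.IdomainMonic.modpE; last by case: hI.
by [].
Qed.

Definition HK : 'M[K]_(d + r, n) := map_mx (in_qpoly p) HH.

Lemma HK_minor (f : {ffun 'I_(d + r) -> 'I_n}) : incr f -> \det (colsub f HK) = 0.
Proof.
move=> hf.
have -> : colsub f HK = map_mx (in_qpoly p) (colsub f HH) by apply/matrixP=> i j; rewrite !mxE.
rewrite det_map_mx; exact: phi_dvd (hdiv hf).
Qed.

Lemma exists_w : exists w : 'rV[K]_(d + r), w != 0 /\ w *m HK = 0.
Proof.
have nrf : ~~ row_free HK.
  apply/negP => rf; have [g [hg]] := minor_nonzero rf.
  by rewrite HK_minor // eqxx.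
have : kermx HK != 0 by rewrite kermx_eq0.
case: (pickP (fun i => row i (kermx HK) != 0)) => [i hi|none] hK.
  exists (row i (kermx HK)); split => //; apply/eqP.
  by rewrite -sub_kermx row_sub.
case/negP: hK; apply/eqP/row_matrixP => i; rewrite row0.
by apply/eqP; move: (none i) => /= /negbFE.
Qed.

Definition ell (c a : K) : F := ((c * a : K) : {poly F})`_0.
Definition iota (t : F) : K := in_qpoly p t%:P.

Lemma ellD c a b : ell c (a + b) = ell c a + ell c b.
Proof. by rewrite /ell mulrDr poly_of_qpolyD coefD. Qed.

Lemma ell0 c : ell c 0 = 0.
Proof. by rewrite /ell mulr0 coef0. Qed.

Lemma iotaE t : iota t = t *: 1.
Proof. by rewrite /iota -alg_polyC in_qpolyZ in_qpoly1. Qed.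

Lemma ell_iota c a t : ell c (a * iota t) = ell c a * t.
Proof.
rewrite /ell iotaE -scalerAr mulr1 -scalerAr.
by rewrite poly_of_qpolyZ coefZ mulrC.
Qed.

Lemma ell_mul c x a : ell c (x * a) = ell (c * x) a.
Proof. by rewrite /ell mulrA. Qed.

Lemma ell_inv a : a != 0 -> ell a^-1 a = 1.
Proof. by move=> a0; rewrite /ell mulVf //= coefC. Qed.

Lemma ell_mx c m1 m2 m3 (X : 'M[K]_(m1, m2)) (Y : 'M[F]_(m2, m3)) :
  map_mx (ell c) (X *m map_mx iota Y) = map_mx (ell c) X *m Y.
Proof.
apply/matrixP=> i j; rewrite !mxE (big_morph (ell c) (ellD c) (ell0 c)).
by apply: eq_bigr => l _; rewrite !mxE ell_iota.
Qed.

Lemma ell_mxD c m1 m2 (X Y : 'M[K]_(m1, m2)) :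
  map_mx (ell c) (X + Y) = map_mx (ell c) X + map_mx (ell c) Y.
Proof. by apply/matrixP=> i j; rewrite !mxE ellD. Qed.

Lemma ell_mxZ c x m1 m2 (X : 'M[K]_(m1, m2)) :
  map_mx (ell c) (x *: X) = map_mx (ell (c * x)) X.
Proof. by apply/matrixP=> i j; rewrite !mxE ell_mul. Qed.

Lemma ell_mx0 c m1 m2 : map_mx (ell c) (0 : 'M[K]_(m1, m2)) = 0.
Proof. by apply/matrixP=> i j; rewrite !mxE ell0. Qed.

Lemma mapPC m1 m2 (X : 'M[F]_(m1, m2)) :
  map_mx (in_qpoly p) (PC X) = map_mx iota X :> 'M[K]_(m1, m2).
Proof. by apply/matrixP=> i j; rewrite !mxE. Qed.

Local Notation xi := (in_qpoly p 'X : K).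

Lemma HK_eq : HK = col_mx (map_mx iota (Nb *m J))
   (map_mx iota E *m (xi *: map_mx iota J - map_mx iota Bt)).
Proof.
rewrite /HK /H map_col_mx MT_eq; congr col_mx; first exact: mapPC.
rewrite map_mxM map_mxB map_mxZ !mapPC.
by [].
Qed.

Lemma sumsmxM_sub (I : finType) (P : pred I) m q (A_ : I -> 'M[F]_m)
    (C : 'M[F]_(m, q)) q2 (D : 'M[F]_(q2, q)) :
  (forall i, P i -> (A_ i *m C <= D)%MS) -> ((\sum_(i | P i) A_ i)%MS *m C <= D)%MS.
Proof.
move=> H; apply: (big_ind (fun X => (X *m C <= D)%MS)) => [|X Y hX hY|i Pi].
- by rewrite mul0mx sub0mx.
- by rewrite addsmxMr addsmx_sub hX hY.
- exact: H.
Qed.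

Lemma descent : False.
Proof.
have [w [w0 hw]] := exists_w.
rewrite HK_eq -[w]hsubmxK mul_row_col in hw.
move: w0; rewrite -[w]hsubmxK.
set w1 := lsubmx w in hw *; set w2 := rsubmx w in hw * => w0.
set u := w2 *m map_mx iota E.
have key : u *m map_mx iota Bt =
    w1 *m map_mx iota (Nb *m J) + xi *: (u *m map_mx iota J).
  move/eqP: hw; rewrite (mulmxA w2) -/u mulmxBr -scalemxAr addrA subr_eq0.
  by move/eqP.
have [w2_0|w2n0] := eqVneq w2 0.
  have w1n0 : w1 != 0.
    by move: w0; rewrite w2_0; apply: contra => /eqP ->; rewrite row_mx0.
  have /rV0Pn[j hj] := w1n0.
  have u0 : u = 0 by rewrite /u w2_0 mul0mx.
  have h0 : w1 *m map_mx iota (Nb *m J) = 0.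
    by move: key; rewrite u0 !mul0mx scaler0 addr0.
  set v := map_mx (ell (w1 0 j)^-1) w1.
  have : v *m (Nb *m J) = 0 by rewrite /v -ell_mx h0 ell_mx0.
  move/(congr1 (mulmx^~ Jt)); rewrite mul0mx -mulmxA -mulmxA (JJt F hkn) mulmx1.
  move=> hv.
  have [v0 _] := @S_inj _ _ _ _ _ hS _ v 0 ltac:(by rewrite hv mul0mx addr0).
  have v1 : v 0 j = 1 by rewrite /v mxE ell_inv.
  by rewrite v0 mxE in v1; move/eqP: v1; rewrite eq_sym oner_eq0.
have /rV0Pn[j hj] := w2n0.
pose rr (c' : K) := map_mx (ell c') u.
pose Z := (Nb + \sum_(c' : K) <<rr c'>>)%MS.
have hZ : (Z *m Bt <= Z *m J)%MS.
  rewrite addsmxMr addsmx_sub; apply/andP; split.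
    rewrite -(C11E hkn hNb); apply: submx_trans (submxMl _ _) _.
    by apply: submxMr; apply: addsmxSl.
  apply: sumsmxM_sub => c' _; rewrite (eqmxMr _ (genmxE _)).
  have -> : rr c' *m Bt = (map_mx (ell c') w1 *m Nb + rr (c' * xi)) *m J.
    by rewrite /rr -ell_mx key ell_mxD ell_mxZ !ell_mx mulmxDl mulmxA.
  apply: submxMr; apply: addmx_sub.
    by apply: submx_trans (submxMl _ _) (addsmxSl _ _).
  apply: submx_trans (addsmxSr Nb _); apply: (sumsmx_sup (c' * xi)) => //.
  by rewrite genmxE.
have ZN : (Z <= Nb)%MS by rewrite hNb; apply: (Nk_max hkn).
have : (rr (w2 0 j)^-1 <= Nb)%MS.
  apply: submx_trans ZN; apply: submx_trans (addsmxSr Nb _).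
  by apply: (sumsmx_sup (w2 0 j)^-1) => //; rewrite genmxE.
rewrite /rr /u ell_mx; set v := map_mx _ w2; case/submxP => y hy.
have [_ v0] := @S_inj _ _ _ _ _ hS _ (- y) v ltac:(by rewrite hy mulNmx addNr).
have v1 : v 0 j = 1 by rewrite /v mxE ell_inv.
by rewrite v0 mxE in v1; move/eqP: v1; rewrite eq_sym oner_eq0.
Qed.

End Descent.


Section CoreSize.
Variable F : finFieldType.
Variables n d r : nat.
Hypothesis hkn : (d + r <= n)%N.
Variable B : 'M[F]_(n, d + r).
Variable Nb : 'M[F]_(d, d + r).
Variable E : 'M[F]_(r, d + r).
Hypothesis hNb : (Nb :=: Nk B)%MS.
Hypothesis hS : col_mx Nb E \in unitmx.

Local Notation M := (charmx B).
Local Notation minor f := (\det (colsub f (MT B))).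
Local Notation chi := (char_poly (C11 B Nb)).

Lemma minor_link (f : {ffun 'I_(d + r) -> 'I_n}) (g : {ffun 'I_(d + r) -> 'I_(d + r)}) :
  incr g -> \det (mxsub f g M) = minor f.
Proof.
move=> hg; rewrite -det_tr /MT; congr (\det _).
by apply/matrixP=> i j; rewrite !mxE (incr_id hg).
Qed.

Lemma detS_neq0 : \det (S Nb E) != 0.
Proof. by move: hS; rewrite unitmxE unitfE. Qed.

Lemma chi_dvd_minor (f : 'I_(d + r) -> 'I_n) : chi %| minor f.
Proof.
rewrite -(dvdpZr _ _ detS_neq0) -mul_polyC (KI hkn E hNb).
exact: dvdp_mulIl.
Qed.

Definition f0 : {ffun 'I_(d + r) -> 'I_n} := [ffun i => widen_ord hkn i].
Definition g0 : {ffun 'I_(d + r) -> 'I_(d + r)} := [ffun i => i].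

Lemma f0_incr : incr f0.
Proof. by apply: incrI => a b; rewrite !ffunE. Qed.

Lemma g0_incr : incr g0.
Proof. by apply: incrI => a b; rewrite !ffunE. Qed.

Lemma minor_f0 : minor f0 != 0.
Proof.
rewrite -(minor_link f0 g0_incr).
have -> : mxsub f0 g0 M = char_poly_mx (mxsub f0 g0 B).
  apply/matrixP=> i j; rewrite !mxE !ffunE /=.
  have [ij|nij] := eqVneq i j.
    by rewrite ij eqxx ltn_ord /= mulr1 mulr1n.
  have -> : (nat_of_ord i == nat_of_ord j) = false by apply/negbTE.
  by rewrite /= mulr0 mulr0n.
exact: (monic_neq0 (char_poly_monic _)).
Qed.

Lemma core_size : size (mgcd M (d + r)) = d.+1.
Proof.
set g := mgcd M (d + r).
have chig : chi %| g.
  apply: dvd_mgcd => f g' _ hg'; rewrite minor_link //; exact: chi_dvd_minor.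
have g_neq0 : g != 0.
  apply: contraNneq minor_f0 => g0'.
  have := mgcd_dvd M f0_incr g0_incr; rewrite -/g g0' dvd0p.
  by rewrite (minor_link f0 g0_incr).
have chi0 : chi != 0 := monic_neq0 (char_poly_monic _).
set q := g %/ chi.
have gq : g = q * chi by rewrite Pdiv.Field.divpK.
have q0 : q != 0 by apply: contraNneq g_neq0 => q0; rewrite gq q0 mul0r.
have qh : forall f : {ffun 'I_(d + r) -> 'I_n}, incr f -> q %| \det (colsub f (H B Nb E)).
  move=> f hf.
  rewrite -(dvdp_mul2r _ _ chi0) [X in _ %| X]mulrC -(KI hkn E hNb) mul_polyC dvdpZr ?detS_neq0 //.
  by rewrite -gq -(minor_link f g0_incr) mgcd_dvd // g0_incr.
have sq : size q = 1%N.
  case: (ltngtP (size q) 1) => // hq.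
    by move: q0; rewrite -size_poly_gt0; move: hq; case: (size q).
  have [p [hp pq]] := exists_irr hq.
  exfalso; apply: (descent hkn hNb hS hp) => f hf.
  exact: dvdp_trans pq (qh f hf).
by rewrite gq size_mul // sq add1n size_char_poly.
Qed.

End CoreSize.

Theorem mainTheorem1 (F : finFieldType) (n k : nat) (hk : (0 < k)%N) (hkn : (k <= n)%N)
  (B : 'M[F]_(n, k)) :
  \rank (maxInv B) =
  (size (\prod_(1 <= i < k.+1) invfact (charmx B) i)).-1.
Proof.
set P := fun i => detdiv (charmx B) i.
have tel := @telescope _ P k.
have hdiv : forall i, (0 < i <= k)%N -> P i.-1 %| P i.
  move=> i /andP[i0 _]; rewrite /P (eqp_dvdl _ (detdiv_eqp _ _)) (eqp_dvdr _ (detdiv_eqp _ _)).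
  by rewrite -{2}(prednK i0) mgcd_chain.
have := tel hdiv => {tel}.
rewrite /invfact -/P => tel.
have P0 : P 0%N %= 1 by apply: eqp_trans (detdiv_eqp _ _) (mgcd0 _).
have eqk : \prod_(1 <= i < k.+1) (P i %/ P i.-1) %= mgcd (charmx B) k.
  apply: eqp_trans (detdiv_eqp _ _); rewrite -/(P k) -tel.
  by rewrite eqp_sym -[X in _ %= X]mulr1 eqp_mull.
rewrite (eqp_size eqk) (rank_maxInv hkn).
set N := Nk B.
have hdr : k = (\rank N + \rank (N^C)%MS)%N by rewrite mxrank_compl subnKC // rank_leq_col.
have hS : row_full (col_mx (row_base N) (row_base (N^C)%MS)).
  rewrite /row_full -addsmxE.
  by rewrite (adds_eqmx (eq_row_base N) (eq_row_base (N^C)%MS)); apply: addsmx_compl_full.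
have hNb := eq_row_base N.
move: (row_base N) (row_base (N^C)%MS) hNb hS; rewrite -/N.
move: (\rank N) (\rank (N^C)%MS) hdr => d r e.
subst k => Nb E hNb hS.
by rewrite (core_size hkn hNb (_ : col_mx Nb E \in unitmx)) // -row_full_unit.
Qed.
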